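(* Let $\rho\in(0,1)$. For any $z\in\mathbb C$ with $|z|\le\rho$, $$\big|1-\exp(\mathrm i\phi(1+z))+\mathrm i\,\Im(z)\big|\le\frac{2-\rho}{(1-\rho)^2}|z|^2.$$
   Context: For $u\in\mathbb C$, $\exp(\mathrm i\phi(u))=u/|u|$ if $u\neq0$ (and $1$ if $u=0$). *)

(* Defs.v *)
From mathcomp Require Import all_boot all_order all_algebra.
From mathcomp Require Import complex.
From mathcomp Require Import reals.
Set Implicit Arguments. Unset Strict Implicit. Unset Printing Implicit Defensive.
Import Order.TTheory GRing.Theory Num.Theory.
Local Open Scope ring_scope.
Local Open Scope complex_scope.

(* exp(i phi(u)) : the unit phase factor u/|u| (and 1 if u = 0). *)
Definition expiphi (R : rcfType) (u : R[i]) : R[i] :=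
  if u == 0 then 1 else u / `|u|.

(* Main.v *)
Require Import Defs.
From mathcomp Require Import all_boot all_order all_algebra.
From mathcomp Require Import complex.
From mathcomp Require Import reals.
From mathcomp Require Import ring lra.
Import Order.TTheory GRing.Theory Num.Theory.
Local Open Scope ring_scope.
Local Open Scope complex_scope.

Lemma normC_real (R : rcfType) (x : R) : `|x%:C| = `|x|%:C :> R[i].
Proof. by rewrite normc_def /= expr0n /= addr0 sqrtr_sqr. Qed.

Lemma normC_i (R : rcfType) : `|'i| = 1 :> R[i].
Proof. by rewrite normc_def /= expr0n /= add0r expr1n sqrtr1. Qed.

Theorem lemma17 (R : realType) (rho : R) (hrho0 : 0 < rho) (hrho1 : rho < 1)
  (z : R[i]) (hz : `|z| <= rho%:C) :
  `|1 - expiphi (1 + z) + 'i * (complex.Im z)%:C|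
    <= ((2 - rho) / (1 - rho) ^+ 2)%:C * `|z| ^+ 2.
Proof.
case: z hz => a b hz.
rewrite -add_Re2_Im2 /=.
move: hz; rewrite normc_def lecR /= => hs.
set s := Num.sqrt _ in hs.
have s0 : 0 <= s by rewrite sqrtr_ge0.
have s2 : s ^+ 2 = a ^+ 2 + b ^+ 2 by rewrite sqr_sqrtr // addr_ge0 // sqr_ge0.
have hb2 : 0 <= b ^+ 2 by rewrite sqr_ge0.
have : `|a| <= s by rewrite -sqrtr_sqr; apply: ler_wsqrtr; lra.
rewrite ler_norml => /andP [ha1 ha2].
have : `|b| <= s by rewrite -sqrtr_sqr; apply: ler_wsqrtr; rewrite lerDr sqr_ge0.
move=> hbs.
have ew : (1 + a +i* b) = (1 + a)%:C + 'i * b%:C.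
  by apply/eqP; rewrite eq_complex /=; apply/andP; split; apply/eqP; ring.
set r := Num.sqrt ((1 + a) ^+ 2 + b ^+ 2).
have r0 : 0 <= r by rewrite sqrtr_ge0.
have r2 : r ^+ 2 = (1 + a) ^+ 2 + b ^+ 2 by rewrite sqr_sqrtr // addr_ge0 // sqr_ge0.
have nw : `|1 + a +i* b| = r%:C.
 by rewrite normc_def /= add0r.
have w0 : 1 + a +i* b != 0.
  apply/eqP => /eqP; rewrite eq_complex /= => /andP [/eqP h _].
  lra.
rewrite /expiphi (negbTE w0) nw ew.
have hra : 1 + a <= r.
  have : `|1 + a| <= r by rewrite -sqrtr_sqr; apply: ler_wsqrtr; lra.
  by rewrite ler_norml => /andP [].
have hr1 : r <= 1 + s.
  have : r <= `|1 + s| by rewrite -sqrtr_sqr; apply: ler_wsqrtr; nra.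
  by rewrite ger0_norm //; lra.
have hr2 : 1 - s <= r.
  have : `|1 - s| <= r by rewrite -sqrtr_sqr; apply: ler_wsqrtr; nra.
  by rewrite ler_norml => /andP [].
have rp : 0 < r by lra.
have rC0 : r%:C != 0 by rewrite eq_complex /= eqxx andbT gt_eqF.
have eE : 1 - ((1 + a)%:C + 'i * b%:C) / r%:C + 'i * b%:C =
   ((r - 1 - a)%:C + 'i * (b * (r - 1))%:C) * (r^-1)%:C.
  rewrite fmorphV !rmorphB !rmorphM /= !rmorph1. field. done.
rewrite eE normrM normC_real (ger0_norm (ltW (_ : 0 < r^-1))) //.
  2: by rewrite invr_gt0.
have hN : `|(r - 1 - a)%:C + 'i * (b * (r - 1))%:C| <= (`|r - 1 - a| + `|b * (r - 1)|)%:C.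
  rewrite [X in _ <= X]rmorphD /=; apply: le_trans (ler_normD _ _) _.
  by rewrite normrM normC_i mul1r !normC_real.
apply: le_trans (ler_wpM2r _ hN) _; first by rewrite lecR invr_ge0.
rewrite -!rmorphM lecR.
set S := a ^+ 2 + b ^+ 2.
have hp0 : 0 <= r - 1 - a by lra.
rewrite (ger0_norm hp0) normrM.
have hq : `|b| * `|r - 1| <= S.
  rewrite /S -s2 expr2; apply: ler_pM => //.
  by rewrite ler_norml; apply/andP; split; lra.
set c := 1 - rho.
have c0 : 0 < c by rewrite /c; lra.
have hrc : c <= r by rewrite /c; lra.
have hpb : (r - 1 - a) * (r + 1 + a) = b ^+ 2.
  have -> : b ^+ 2 = r ^+ 2 - (1 + a) ^+ 2 by rewrite r2; ring.
  ring.
have hp : (r - 1 - a) * (2 * c) <= S.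
  have : (r - 1 - a) * (2 * c) <= (r - 1 - a) * (r + 1 + a).
    by apply: ler_wpM2l => //; rewrite /c; lra.
  rewrite hpb => h; have := sqr_ge0 a; rewrite /S; lra.
set k := c^-1.
have ck : c * k = 1 by rewrite /k divff // gt_eqF.
have k0 : 0 < k by rewrite /k invr_gt0.
have -> : 2 - rho = 1 + c by rewrite /c; ring.
have -> : (1 + c) / c ^+ 2 = (1 + c) * k ^+ 2 by rewrite /k exprVn.
rewrite ler_pdivrMr //.
have S0 : 0 <= S by rewrite /S addr_ge0 // sqr_ge0.
have h1 : (1 + c) * k ^+ 2 * r >= k + 1.
  have : (1 + c) * k ^+ 2 * c <= (1 + c) * k ^+ 2 * r.
    by apply: ler_wpM2l => //; apply: mulr_ge0; [lra | rewrite sqr_ge0].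
  have -> : (1 + c) * k ^+ 2 * c = k + 1.
    rewrite expr2 (_ : (1 + c) * (k * k) * c = (1 + c) * k * (c * k)); last by ring.
    by rewrite ck mulr1 mulrDl mul1r ck.
  done.
have h2 : (r - 1 - a) <= S * k / 2.
  have -> : r - 1 - a = (r - 1 - a) * (2 * c) * k / 2.
    rewrite -!mulrA [c * (k / 2)]mulrA ck mul1r mulrA.
    by rewrite mulfK // (eqr_nat _ 2 0).
  by rewrite ler_pM2r ?invr_gt0 // ?ler_pM2r //; lra.
have h3 : S * (k + 1) <= (1 + c) * k ^+ 2 * S * r.
  rewrite -mulrA [S * r]mulrC mulrA [X in _ <= X]mulrC.
  by apply: ler_wpM2l.
have h4 : S * k / 2 <= S * k by nra.
nra.
Qed.
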